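(* Let $k$ be a real division algebra (one of $\mathbb{R},\mathbb{C},\mathbb{H},\mathbb{O}$) and let $\mathcal Z\subset k$ be a discrete subring closed under conjugation. Let $(a_n)_{n\ge1}$ be a sequence in $\mathcal Z$ and $x_0\in k$, and set $x_n=T_{a_n}\cdots T_{a_1}x_0$. Suppose that all $x_n$ are defined and $\|x_n\|<1$ for all $n\geq 0$. Then the associated continued fraction converges to $x_0$: \[x_0=\lim_{n\to\infty} T^{-1}_{a_1}\cdots T^{-1}_{a_n}0=\lim_{n\to\infty} \cfrac{1}{a_1+\cfrac{1}{\ddots+\cfrac{1}{a_n}}}.\]
   Context: $k$ is identified with $\mathbb{R}^d$ ($d=1,2,4,8$) with basis $1=e_0,e_1,\dots,e_{d-1}$ and its standard multiplication; for $x=a_0+\sum_{i\ge1}a_ie_i$, $\Re(x)=a_0$, $\overline{x}=\Re(x)-(x-\Re(x))$, $\|x\|^2=x\overline{x}$ (Euclidean norm), and convergence is with respect to the Euclidean distance. For $p,q\in k$, $p/q=pq^{-1}$. A subring is discrete if it is a discrete subset of $\mathbb{R}^d$. For a digit $a\in\mathcal Z$, $T_a x=x^{-1}-a$ and $T_a^{-1}x=(x+a)^{-1}$. The case $n=0$ means $x_0$ itself. *)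

(* Defs.v *)
From Stdlib Require Import Reals Lra Arith.
Open Scope R_scope.

(* The Cayley-Dickson algebras: CD 0 = R, CD 1 = C, CD 2 = H, CD 3 = O.
   CD m is R^(2^m) (nested pairs), with basis e_0 = 1, ... in the usual
   Cayley-Dickson ordering. *)
Fixpoint CD (m : nat) : Type :=
  match m with 0%nat => R | S m' => (CD m' * CD m')%type end.

Fixpoint cd_zero (m : nat) : CD m :=
  match m return CD m with 0%nat => 0 | S m' => (cd_zero m', cd_zero m') end.

Fixpoint cd_one (m : nat) : CD m :=
  match m return CD m with 0%nat => 1 | S m' => (cd_one m', cd_zero m') end.

Fixpoint cd_add (m : nat) : CD m -> CD m -> CD m :=
  match m return CD m -> CD m -> CD m with
  | 0%nat => Rplus
  | S m' => fun x y => (cd_add m' (fst x) (fst y), cd_add m' (snd x) (snd y))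
  end.

Fixpoint cd_opp (m : nat) : CD m -> CD m :=
  match m return CD m -> CD m with
  | 0%nat => Ropp
  | S m' => fun x => (cd_opp m' (fst x), cd_opp m' (snd x))
  end.

Definition cd_sub (m : nat) (x y : CD m) : CD m := cd_add m x (cd_opp m y).

Fixpoint cd_scale (m : nat) (r : R) : CD m -> CD m :=
  match m return CD m -> CD m with
  | 0%nat => fun x => r * x
  | S m' => fun x => (cd_scale m' r (fst x), cd_scale m' r (snd x))
  end.

Fixpoint cd_conj (m : nat) : CD m -> CD m :=
  match m return CD m -> CD m with
  | 0%nat => fun x => x
  | S m' => fun x => (cd_conj m' (fst x), cd_opp m' (snd x))
  end.

Fixpoint cd_mul (m : nat) : CD m -> CD m -> CD m :=
  match m return CD m -> CD m -> CD m with
  | 0%nat => Rmult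
  | S m' => fun x y =>
      let a := fst x in let b := snd x in let c := fst y in let d := snd y in
      (cd_sub m' (cd_mul m' a c) (cd_mul m' (cd_conj m' d) b),
       cd_add m' (cd_mul m' d a) (cd_mul m' b (cd_conj m' c)))
  end.

Fixpoint cd_norm2 (m : nat) : CD m -> R :=
  match m return CD m -> R with
  | 0%nat => fun x => x * x
  | S m' => fun x => cd_norm2 m' (fst x) + cd_norm2 m' (snd x)
  end.

Definition cd_norm (m : nat) (x : CD m) : R := sqrt (cd_norm2 m x).

(* inverse x^{-1} = conj(x) / ||x||^2 (total: 0^{-1} = 0, never used on 0
   in the hypotheses). *)
Definition cd_inv (m : nat) (x : CD m) : CD m :=
  cd_scale m (/ cd_norm2 m x) (cd_conj m x).

Definition is_subring (m : nat) (Z : CD m -> Prop) : Prop :=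
  Z (cd_one m) /\
  (forall x y, Z x -> Z y -> Z (cd_add m x y)) /\
  (forall x, Z x -> Z (cd_opp m x)) /\
  (forall x y, Z x -> Z y -> Z (cd_mul m x y)).

Definition is_discrete (m : nat) (Z : CD m -> Prop) : Prop :=
  forall z, Z z -> exists eps, 0 < eps /\
    forall w, Z w -> cd_norm m (cd_sub m w z) < eps -> w = z.

Definition conj_closed (m : nat) (Z : CD m -> Prop) : Prop :=
  forall z, Z z -> Z (cd_conj m z).

Definition T (m : nat) (a x : CD m) : CD m := cd_sub m (cd_inv m x) a.
Definition Tinv (m : nat) (a y : CD m) : CD m := cd_inv m (cd_add m y a).

Fixpoint orbit (m : nat) (a : nat -> CD m) (x0 : CD m) (n : nat) : CD m :=
  match n with
  | 0%nat => x0
  | S n' => T m (a (S n')) (orbit m a x0 n')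
  end.

Fixpoint cf_from (m : nat) (a : nat -> CD m) (s l : nat) : CD m :=
  match l with
  | 0%nat => cd_zero m
  | S l' => Tinv m (a s) (cf_from m a (S s) l')
  end.

Definition convergent (m : nat) (a : nat -> CD m) (n : nat) : CD m :=
  cf_from m a 1 n.

Definition cd_converges_to (m : nat) (u : nat -> CD m) (l : CD m) : Prop :=
  forall eps, 0 < eps -> exists N, forall n, (N <= n)%nat ->
    cd_norm m (cd_sub m (u n) l) < eps.

(* Main.v *)
Require Import Defs.
From Stdlib Require Import Reals Lra Lia List ZArith Classical.
Open Scope R_scope.


Fixpoint ip (m : nat) : CD m -> CD m -> R :=
  match m return CD m -> CD m -> R with
  | 0%nat => fun x y => x * y
  | S m' => fun x y => ip m' (fst x) (fst y) + ip m' (snd x) (snd y)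
  end.


Ltac dpairs := repeat match goal with x : CD (S _) |- _ => destruct x end; simpl in *.
Lemma norm2_ip m x : cd_norm2 m x = ip m x x.
Proof. revert x; induction m; intros; dpairs. ring. rewrite !IHm; ring. Qed.
Lemma ip_sym m x y : ip m x y = ip m y x.
Proof. revert x y; induction m; intros; dpairs. ring. rewrite (IHm c), (IHm c0); ring. Qed.
Lemma ip_add_l m x y z : ip m (cd_add m x y) z = ip m x z + ip m y z.
Proof. revert x y z; induction m; intros; dpairs. ring. rewrite !IHm; ring. Qed.
Lemma ip_opp_l m x z : ip m (cd_opp m x) z = - ip m x z.
Proof. revert x z; induction m; intros; dpairs. ring. rewrite !IHm; ring. Qed.
Lemma ip_scale_l m r x z : ip m (cd_scale m r x) z = r * ip m x z.
Proof. revert x z; induction m; intros; dpairs. ring. rewrite !IHm; ring. Qed.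
Lemma ip_zero_l m z : ip m (cd_zero m) z = 0.
Proof. revert z; induction m; intros; dpairs. ring. rewrite !IHm; ring. Qed.
Lemma ip_opp_r m x z : ip m z (cd_opp m x) = - ip m z x.
Proof. rewrite ip_sym, ip_opp_l, ip_sym; auto. Qed.
Lemma ip_add_r m x y z : ip m z (cd_add m x y) = ip m z x + ip m z y.
Proof. rewrite ip_sym, ip_add_l, (ip_sym m x), (ip_sym m y); auto. Qed.
Lemma ip_scale_r m r x z : ip m z (cd_scale m r x) = r * ip m z x.
Proof. rewrite ip_sym, ip_scale_l, ip_sym; auto. Qed.
Lemma ip_zero_r m z : ip m z (cd_zero m) = 0.
Proof. rewrite ip_sym; apply ip_zero_l. Qed.

Ltac cdeq m IHm := induction m as [|m IHm]; intros; dpairs; [ try ring | f_equal; auto ].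

Lemma opp_opp m x : cd_opp m (cd_opp m x) = x.
Proof. revert x; cdeq m IHm. Qed.
Lemma conj_conj m x : cd_conj m (cd_conj m x) = x.
Proof. revert x; cdeq m IHm. apply opp_opp. Qed.
Lemma conj_add m x y : cd_conj m (cd_add m x y) = cd_add m (cd_conj m x) (cd_conj m y).
Proof. revert x y; cdeq m IHm. clear IHm. revert c0 c2. induction m; intros; dpairs. ring. f_equal; auto. Qed.
Lemma opp_add m x y : cd_opp m (cd_add m x y) = cd_add m (cd_opp m x) (cd_opp m y).
Proof. revert x y; cdeq m IHm. Qed.
Lemma scale_opp m r x : cd_scale m r (cd_opp m x) = cd_opp m (cd_scale m r x).
Proof. revert x; cdeq m IHm. Qed.
Lemma conj_opp m x : cd_conj m (cd_opp m x) = cd_opp m (cd_conj m x).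
Proof. revert x; cdeq m IHm. Qed.
Lemma conj_scale m r x : cd_conj m (cd_scale m r x) = cd_scale m r (cd_conj m x).
Proof. revert x; cdeq m IHm. rewrite scale_opp; auto. Qed.
Lemma opp_zero m : cd_opp m (cd_zero m) = cd_zero m.
Proof. cdeq m IHm. Qed.
Lemma conj_zero m : cd_conj m (cd_zero m) = cd_zero m.
Proof. cdeq m IHm. apply opp_zero. Qed.
Lemma conj_one m : cd_conj m (cd_one m) = cd_one m.
Proof. cdeq m IHm. apply opp_zero. Qed.
Lemma scale_zero m r : cd_scale m r (cd_zero m) = cd_zero m.
Proof. cdeq m IHm. Qed.
Lemma scale_scale m r s x : cd_scale m r (cd_scale m s x) = cd_scale m (r*s) x.
Proof. revert x; cdeq m IHm. Qed.
Lemma scale_1 m x : cd_scale m 1 x = x.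
Proof. revert x; cdeq m IHm. Qed.
Lemma scale_0 m x : cd_scale m 0 x = cd_zero m.
Proof. revert x; cdeq m IHm. Qed.
Lemma scale_add_r m r s x : cd_scale m (r+s) x = cd_add m (cd_scale m r x) (cd_scale m s x).
Proof. revert x; cdeq m IHm. Qed.
Lemma scale_add m r x y : cd_scale m r (cd_add m x y) = cd_add m (cd_scale m r x) (cd_scale m r y).
Proof. revert x y; cdeq m IHm. Qed.
Lemma scale_opp_r m r x : cd_scale m (-r) x = cd_opp m (cd_scale m r x).
Proof. revert x; cdeq m IHm. Qed.
Lemma add_comm m x y : cd_add m x y = cd_add m y x.
Proof. revert x y; cdeq m IHm. Qed.
Lemma add_assoc m x y z : cd_add m x (cd_add m y z) = cd_add m (cd_add m x y) z.
Proof. revert x y z; cdeq m IHm. Qed.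
Lemma add_zero_r m x : cd_add m x (cd_zero m) = x.
Proof. revert x; cdeq m IHm. Qed.
Lemma add_zero_l m x : cd_add m (cd_zero m) x = x.
Proof. revert x; cdeq m IHm. Qed.
Lemma add_opp_r m x : cd_add m x (cd_opp m x) = cd_zero m.
Proof. revert x; cdeq m IHm. Qed.
Lemma add_opp_l m x : cd_add m (cd_opp m x) x = cd_zero m.
Proof. revert x; cdeq m IHm. Qed.

Lemma ip_conj m x y : ip m (cd_conj m x) (cd_conj m y) = ip m x y.
Proof. revert x y; induction m; intros; dpairs. ring. rewrite IHm, ip_opp_l, ip_opp_r. ring. Qed.

Lemma norm2_nonneg m x : 0 <= cd_norm2 m x.
Proof. revert x; induction m; intros; dpairs. nra. pose proof (IHm c); pose proof (IHm c0); lra. Qed.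
Lemma norm2_zero m : cd_norm2 m (cd_zero m) = 0.
Proof. induction m; simpl. ring. rewrite IHm; ring. Qed.
Lemma norm2_eq0 m x : cd_norm2 m x = 0 -> x = cd_zero m.
Proof. revert x; induction m; intros; dpairs. nra.
  pose proof (norm2_nonneg m c); pose proof (norm2_nonneg m c0).
  f_equal; apply IHm; lra. Qed.
Lemma norm2_pos m x : x <> cd_zero m -> 0 < cd_norm2 m x.
Proof. intros. pose proof (norm2_nonneg m x). destruct H0; auto. exfalso; apply H, norm2_eq0; auto. Qed.

Lemma mul_zero m : (forall x, cd_mul m (cd_zero m) x = cd_zero m) /\ (forall x, cd_mul m x (cd_zero m) = cd_zero m).
Proof. induction m; split; intros; dpairs; try ring; destruct IHm as [H1 H2]; unfold cd_sub;
  rewrite ?H1, ?H2, ?conj_zero, ?H1, ?H2, ?opp_zero, ?add_zero_r; auto. Qed.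

Lemma mul_opp m : (forall x y, cd_mul m (cd_opp m x) y = cd_opp m (cd_mul m x y)) /\
  (forall x y, cd_mul m x (cd_opp m y) = cd_opp m (cd_mul m x y)).
Proof. induction m; split; intros; dpairs; try ring; destruct IHm as [H1 H2]; unfold cd_sub;
  rewrite ?conj_opp, ?H1, ?H2, ?opp_add, ?H1, ?H2; auto. Qed.

Lemma mul_scal m r : (forall x, cd_mul m (cd_scale m r (cd_one m)) x = cd_scale m r x) /\
  (forall x, cd_mul m x (cd_scale m r (cd_one m)) = cd_scale m r x).
Proof. induction m; split; intros; dpairs; try ring; destruct IHm as [H1 H2];
  destruct (mul_zero m) as [Z1 Z2]; unfold cd_sub;
  rewrite ?scale_zero, ?conj_zero, ?conj_scale, ?conj_one, ?H1, ?H2, ?Z1, ?Z2, ?opp_zero, ?add_zero_r, ?add_zero_l; auto. Qed.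

Lemma mul_conj m : (forall x, cd_mul m x (cd_conj m x) = cd_scale m (cd_norm2 m x) (cd_one m)) /\
  (forall x, cd_mul m (cd_conj m x) x = cd_scale m (cd_norm2 m x) (cd_one m)).
Proof. induction m; split; intros; dpairs; try ring; destruct IHm as [H1 H2];
  destruct (mul_opp m) as [O1 O2]; unfold cd_sub; rewrite ?scale_zero, ?conj_opp, ?conj_conj, ?O1, ?O2, ?opp_opp, ?H1, ?H2,
  ?add_opp_l, ?add_opp_r, <- ?scale_add_r; f_equal; f_equal; ring. Qed.

Lemma norm2_scale m r x : cd_norm2 m (cd_scale m r x) = r * r * cd_norm2 m x.
Proof. rewrite !norm2_ip, ip_scale_l, ip_scale_r; ring. Qed.
Lemma norm2_conj m x : cd_norm2 m (cd_conj m x) = cd_norm2 m x.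
Proof. rewrite !norm2_ip, ip_conj; auto. Qed.
Lemma norm2_opp m x : cd_norm2 m (cd_opp m x) = cd_norm2 m x.
Proof. rewrite !norm2_ip, ip_opp_l, ip_opp_r; ring. Qed.
Lemma norm2_one m : cd_norm2 m (cd_one m) = 1.
Proof. induction m; simpl. ring. rewrite IHm, norm2_zero; ring. Qed.
Lemma norm2_add m u v : cd_norm2 m (cd_add m u v) = cd_norm2 m u + 2 * ip m u v + cd_norm2 m v.
Proof. rewrite !norm2_ip, !ip_add_l, !ip_add_r, (ip_sym m v u); ring. Qed.
Lemma norm2_sub m u v : cd_norm2 m (cd_sub m u v) = cd_norm2 m u - 2 * ip m u v + cd_norm2 m v.
Proof. unfold cd_sub. rewrite norm2_add, norm2_opp, ip_opp_r; ring. Qed.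
Lemma ip_sub_l m u v w : ip m (cd_sub m u v) w = ip m u w - ip m v w.
Proof. unfold cd_sub. rewrite ip_add_l, ip_opp_l; ring. Qed.
Lemma ip_sub_r m u v w : ip m w (cd_sub m u v) = ip m w u - ip m w v.
Proof. unfold cd_sub. rewrite ip_add_r, ip_opp_r; ring. Qed.

Lemma sub_add_cancel m u a : cd_add m (cd_sub m u a) a = u.
Proof. unfold cd_sub. rewrite <- add_assoc, add_opp_l, add_zero_r; auto. Qed.
Lemma add_sub_cancel m u a : cd_sub m (cd_add m u a) a = u.
Proof. unfold cd_sub. rewrite <- add_assoc, add_opp_r, add_zero_r; auto. Qed.
Lemma sub_eq0 m x y : cd_sub m x y = cd_zero m -> x = y.
Proof. intros. rewrite <- (sub_add_cancel m x y), H, add_zero_l; auto. Qed.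
Lemma sub_zero_r m x : cd_sub m x (cd_zero m) = x.
Proof. unfold cd_sub. rewrite opp_zero, add_zero_r; auto. Qed.
Lemma norm2_sub_sym m x y : cd_norm2 m (cd_sub m x y) = cd_norm2 m (cd_sub m y x).
Proof. rewrite !norm2_sub, ip_sym; ring. Qed.
Lemma sub_opp m x y : cd_sub m x (cd_opp m y) = cd_add m x y.
Proof. unfold cd_sub; rewrite opp_opp; auto. Qed.

Lemma norm2_inv m x : x <> cd_zero m -> cd_norm2 m (cd_inv m x) = / cd_norm2 m x.
Proof. intros. pose proof (norm2_pos m x H). unfold cd_inv. rewrite norm2_scale, norm2_conj. field. lra. Qed.
Lemma inv_nz m x : x <> cd_zero m -> cd_inv m x <> cd_zero m.
Proof. intros H E. pose proof (norm2_pos m x H). pose proof (norm2_inv m x H).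
  rewrite E, norm2_zero in H1. assert (/ cd_norm2 m x > 0) by (apply Rinv_0_lt_compat; lra). lra. Qed.
Lemma inv_inv m x : x <> cd_zero m -> cd_inv m (cd_inv m x) = x.
Proof. intros. pose proof (norm2_pos m x H). unfold cd_inv at 1. rewrite norm2_inv; auto.
  unfold cd_inv. rewrite conj_scale, conj_conj, scale_scale.
  replace (/ / cd_norm2 m x * / cd_norm2 m x) with 1 by (field; lra). apply scale_1. Qed.
Lemma ip_inv_l m y z : y <> cd_zero m -> ip m (cd_inv m y) z = ip m y (cd_conj m z) / cd_norm2 m y.
Proof. intros. unfold cd_inv. rewrite ip_scale_l. rewrite <- (conj_conj m z) at 1. rewrite ip_conj. unfold Rdiv; ring. Qed.
Lemma ip_conj_r m x y : ip m x (cd_conj m y) = ip m (cd_conj m x) y.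
Proof. rewrite <- (conj_conj m y) at 2. rewrite ip_conj. auto. Qed.


Definition gstep m (d : R * CD m * R) (b : CD m) : R * CD m * R :=
  match d with (A, W, C) =>
    (A * cd_norm2 m b + 2 * ip m b W + C, cd_conj m (cd_add m W (cd_scale m A b)), A) end.

Fixpoint Gdata m (a : nat -> CD m) (n : nat) {struct n} : R * CD m * R :=
  match n with
  | 0%nat => (0, cd_zero m, 1)
  | S n' => gstep m (Gdata m (fun k => a (S k)) n') (a 1%nat)
  end.

Definition Gev m (d : R * CD m * R) (y : CD m) : R :=
  match d with (A, W, C) => A * cd_norm2 m y - 2 * ip m y W + C end.

Lemma gstep_ev m d b y : y <> cd_zero m ->
  Gev m (gstep m d b) y = cd_norm2 m y * Gev m d (cd_sub m (cd_inv m y) b).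
Proof. intros Hy. pose proof (norm2_pos m y Hy). destruct d as [[A W] C]. unfold Gev, gstep.
  rewrite norm2_sub, ip_sub_l, norm2_inv, !ip_inv_l, conj_add, conj_scale, ip_add_r, ip_scale_r; auto.
  field. lra. Qed.

Lemma Ginv m a n : match Gdata m a n with (A, W, C) => 0 <= A /\ 0 <= C /\ cd_norm2 m W = A * C end.
Proof. revert a; induction n; intros; simpl.
  - rewrite norm2_zero; lra.
  - specialize (IHn (fun k => a (S k))). destruct (Gdata m (fun k => a (S k)) n) as [[A W] C].
    simpl. destruct IHn as [HA [HC HW]].
    assert (E : cd_norm2 m (cd_conj m (cd_add m W (cd_scale m A (a 1%nat)))) =
       A * (A * cd_norm2 m (a 1%nat) + 2 * ip m (a 1%nat) W + C)).
    { rewrite norm2_conj, norm2_add, norm2_scale, ip_scale_r, HW, (ip_sym m W). ring. }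
    split; [|split; auto; rewrite E; ring].
    destruct HA as [HA|HA].
    + pose proof (norm2_nonneg m (cd_conj m (cd_add m W (cd_scale m A (a 1%nat))))). rewrite E in H. nra.
    + subst A. rewrite Rmult_0_l in HW. apply norm2_eq0 in HW. subst W. rewrite ip_zero_r. lra.
Qed.

Lemma Gev_sq m A W C y : cd_norm2 m W = A * C ->
  A * Gev m (A, W, C) y = cd_norm2 m (cd_sub m (cd_scale m A y) W).
Proof. intros H. unfold Gev. rewrite norm2_sub, norm2_scale, ip_scale_l, H. ring. Qed.

Lemma Z_facts m (Z : CD m -> Prop) : is_subring m Z -> conj_closed m Z ->
  Z (cd_zero m) /\
  (forall r x, Z (cd_scale m r (cd_one m)) -> Z x -> Z (cd_scale m r x)) /\
  (forall r s, Z (cd_scale m r (cd_one m)) -> Z (cd_scale m s (cd_one m)) -> Z (cd_scale m (r+s) (cd_one m))) /\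
  (forall r, Z (cd_scale m r (cd_one m)) -> Z (cd_scale m (-r) (cd_one m))) /\
  (forall y, Z y -> Z (cd_scale m (cd_norm2 m y) (cd_one m))).
Proof. intros [H1 [Ha [Ho Hm]]] Hc.
  assert (Z0 : Z (cd_zero m)) by (rewrite <- (add_opp_r m (cd_one m)); auto).
  split; auto. split; [|split; [|split]].
  - intros. rewrite <- (proj1 (mul_scal m r)). auto.
  - intros. rewrite scale_add_r. auto.
  - intros. rewrite scale_opp_r. auto.
  - intros. rewrite <- (proj1 (mul_conj m)). auto.
Qed.

Lemma Gint m (Z : CD m -> Prop) a n : is_subring m Z -> conj_closed m Z ->
  (forall k, (1 <= k)%nat -> Z (a k)) ->
  match Gdata m a n with (A, W, C) => Z (cd_scale m A (cd_one m)) /\ Z W /\ Z (cd_scale m C (cd_one m)) end.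
Proof. intros HR HC. destruct (Z_facts m Z HR HC) as [Z0 [Zs [Zp [Zo Zn]]]].
  pose proof HR as [H1 [Ha [Ho Hm]]].
  revert a; induction n; intros a Ha'; simpl.
  - rewrite scale_0, scale_1. auto.
  - specialize (IHn (fun k => a (S k))). destruct (Gdata m (fun k => a (S k)) n) as [[A W] C].
    simpl. destruct IHn as [HA [HW HCc]]. { intros; apply Ha'; lia. }
    assert (Hb : Z (a 1%nat)) by (apply Ha'; lia).
    split; [|split; auto].
    replace (A * cd_norm2 m (a 1%nat) + 2 * ip m (a 1%nat) W + C) with
      (A * cd_norm2 m (a 1%nat) + (cd_norm2 m (cd_add m (a 1%nat) W) + (- cd_norm2 m (a 1%nat) + (- cd_norm2 m W + C))))
      by (rewrite norm2_add; ring).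
    apply Zp. rewrite <- scale_scale. apply Zs; auto.
    apply Zp; [apply Zn; auto| apply Zp; [apply Zo; auto | apply Zp; [apply Zo; auto | auto]]].
Qed.

Lemma orbit_shift m a x0 k :
  orbit m (fun j => a (S j)) (T m (a 1%nat) x0) k = orbit m a x0 (S k).
Proof. induction k; simpl; auto. rewrite IHk. auto. Qed.

Lemma cf_shift m a s l : cf_from m a (S s) l = cf_from m (fun k => a (S k)) s l.
Proof. revert s; induction l; intros; simpl; auto. rewrite IHl; auto. Qed.

Fixpoint Pr m (a : nat -> CD m) (x0 : CD m) (n : nat) {struct n} : R :=
  match n with
  | 0%nat => 1
  | S n' => cd_norm2 m x0 * Pr m (fun k => a (S k)) (T m (a 1%nat) x0) n'
  end.

Lemma Pr_step m a x0 n : Pr m a x0 (S n) = Pr m a x0 n * cd_norm2 m (orbit m a x0 n).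
Proof. revert a x0; induction n; intros.
  - simpl. ring.
  - change (Pr m a x0 (S (S n))) with (cd_norm2 m x0 * Pr m (fun k => a (S k)) (T m (a 1%nat) x0) (S n)).
    rewrite IHn, orbit_shift. simpl. ring. Qed.

Lemma G_at_x0 m a x0 n : (forall k, orbit m a x0 k <> cd_zero m) ->
  Gev m (Gdata m a n) x0 = Pr m a x0 n.
Proof. revert a x0; induction n; intros a x0 H.
  - simpl. unfold Gev. rewrite ip_zero_r. ring.
  - cbn [Gdata Pr]. rewrite gstep_ev by exact (H 0%nat).
    fold (T m (a 1%nat) x0). rewrite IHn; auto.
    intros k. rewrite orbit_shift. auto. Qed.

Fixpoint ND m (a : nat -> CD m) (n : nat) {struct n} : Prop :=
  match n with
  | 0%nat => True
  | S n' => cd_add m (cf_from m (fun k => a (S k)) 1 n') (a 1%nat) <> cd_zero m /\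
            ND m (fun k => a (S k)) n'
  end.

Lemma G_at_c m a n : ND m a n -> Gev m (Gdata m a (S n)) (cf_from m a 1 n) = 0.
Proof. revert a; induction n; intros a H.
  - simpl. destruct (Gdata m (fun k => a (S k)) 0) as [[A W] C] eqn:E. simpl in E. inversion E; subst.
    unfold gstep, Gev. rewrite norm2_zero, ip_zero_l. ring.
  - destruct H as [Hu HN].
    change (Gdata m a (S (S n))) with (gstep m (Gdata m (fun k => a (S k)) (S n)) (a 1%nat)).
    simpl cf_from. rewrite cf_shift. unfold Tinv.
    rewrite gstep_ev by (apply inv_nz; auto).
    rewrite inv_inv by auto. rewrite add_sub_cancel, IHn; auto. ring. Qed.

Definition valid m (Z : CD m -> Prop) a x0 :=
  (forall k, (1 <= k)%nat -> Z (a k)) /\ (forall k, orbit m a x0 k <> cd_zero m) /\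
  (forall k, cd_norm2 m (orbit m a x0 k) < 1).

Lemma valid_shift m Z a x0 : valid m Z a x0 -> valid m Z (fun k => a (S k)) (T m (a 1%nat) x0).
Proof. intros [H1 [H2 H3]]. split; [|split]; intros; rewrite ?orbit_shift; auto; apply H1; lia. Qed.

Lemma Pr_pos m Z a x0 n : valid m Z a x0 -> 0 < Pr m a x0 n.
Proof. intros [_ [H2 _]]. induction n. simpl; lra. rewrite Pr_step.
  pose proof (norm2_pos m _ (H2 n)). nra. Qed.

Lemma Pr_lt m Z a x0 n : valid m Z a x0 -> Pr m a x0 (S n) < Pr m a x0 n.
Proof. intros V. pose proof (Pr_pos m Z a x0 n V). destruct V as [_ [H2 H3]]. rewrite Pr_step.
  pose proof (norm2_pos m _ (H2 n)). specialize (H3 n). nra. Qed.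

Lemma Pr_le1 m Z a x0 n : valid m Z a x0 -> Pr m a x0 n <= 1.
Proof. intros V. induction n. simpl; lra. pose proof (Pr_lt m Z a x0 n V). lra. Qed.

Lemma Pr_decr m Z a x0 n n' : valid m Z a x0 -> (n < n')%nat -> Pr m a x0 n' < Pr m a x0 n.
Proof. intros V H. induction H. apply (Pr_lt m Z); auto. pose proof (Pr_lt m Z a x0 m0 V). lra. Qed.

Lemma Zsep m (Z : CD m -> Prop) : is_subring m Z -> is_discrete m Z ->
  exists d, 0 < d /\ forall z z', Z z -> Z z' -> cd_norm2 m (cd_sub m z z') < d -> z = z'.
Proof. intros [H1 [Ha [Ho Hm]]] HD.
  assert (Z0 : Z (cd_zero m)) by (rewrite <- (add_opp_r m (cd_one m)); auto).
  destruct (HD _ Z0) as [e [He Hw]]. exists (e*e). split. nra.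
  intros z z' Hz Hz' Hn. apply sub_eq0. apply Hw. unfold cd_sub at 1; auto.
  unfold cd_norm. rewrite sub_zero_r. rewrite <- (sqrt_square e) by lra.
  apply sqrt_lt_1; try nra. apply norm2_nonneg. Qed.

Lemma A_ge1 m (Z : CD m -> Prop) r : is_subring m Z -> is_discrete m Z ->
  Z (cd_scale m r (cd_one m)) -> 0 < r -> 1 <= r.
Proof. intros HR HD Hr Hp. destruct (Zsep m Z HR HD) as [d [Hd Hs]].
  pose proof HR as [H1 [Ha [Ho Hm]]].
  assert (Z0 : Z (cd_zero m)) by (rewrite <- (add_opp_r m (cd_one m)); auto).
  destruct (Rle_or_lt 1 r) as [|Hlt]; auto. exfalso.
  assert (Hk : forall k, Z (cd_scale m (r ^ k) (cd_one m))).
  { induction k. simpl. rewrite scale_1; auto. simpl.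
    rewrite <- scale_scale, <- (proj1 (mul_scal m r)). auto. }
  destruct (pow_lt_1_zero r ltac:(rewrite Rabs_right; lra) (sqrt d) ltac:(apply sqrt_lt_R0; auto)) as [N HN].
  specialize (HN N (le_n N)).
  assert (E : cd_scale m (r ^ N) (cd_one m) = cd_zero m).
  { apply Hs; auto. rewrite sub_zero_r, norm2_scale, norm2_one.
    rewrite Rabs_right in HN by (apply Rle_ge, pow_le; lra).
    pose proof (pow_le r N ltac:(lra)).
    rewrite <- (sqrt_sqrt d) by lra. nra. }
  apply (f_equal (cd_norm2 m)) in E. rewrite norm2_scale, norm2_one, norm2_zero in E.
  pose proof (pow_lt r N Hp). nra. Qed.

Lemma scale_sub m r x y : cd_scale m r (cd_sub m x y) = cd_sub m (cd_scale m r x) (cd_scale m r y).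
Proof. unfold cd_sub. rewrite scale_add, scale_opp. auto. Qed.

Lemma mainE m (Z : CD m -> Prop) a x0 n : is_subring m Z -> is_discrete m Z -> conj_closed m Z ->
  valid m Z a x0 -> ND m a n ->
  match Gdata m a (S n) with (A, W, C) =>
    1 <= A /\ W = cd_scale m A (cf_from m a 1 n) /\
    A * cd_norm2 m (cd_sub m x0 (cf_from m a 1 n)) = Pr m a x0 (S n) end.
Proof. intros HR HD HC V HN.
  pose proof (G_at_c m a n HN) as Gc.
  pose proof (G_at_x0 m a x0 (S n) (proj1 (proj2 V))) as Gx.
  pose proof (Pr_pos m Z a x0 (S n) V) as Pp.
  pose proof (Ginv m a (S n)) as Gi.
  pose proof (Gint m Z a (S n) HR HC (proj1 V)) as GI.
  destruct (Gdata m a (S n)) as [[A W] C].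
  destruct Gi as [HA [HCn HW]]. destruct GI as [ZA [ZW ZC]].
  set (c := cf_from m a 1 n) in *.
  assert (Apos : 0 < A).
  { destruct HA as [|HA]; auto. subst A. rewrite Rmult_0_l in HW. apply norm2_eq0 in HW. subst W.
    unfold Gev in Gc, Gx. rewrite ip_zero_r in Gc, Gx. lra. }
  assert (Wc : W = cd_scale m A c).
  { pose proof (Gev_sq m A W C c HW) as Q. rewrite Gc, Rmult_0_r in Q. symmetry in Q.
    apply norm2_eq0 in Q. symmetry; apply sub_eq0; auto. }
  split; [apply (A_ge1 m Z); auto|split; auto].
  pose proof (Gev_sq m A W C x0 HW) as Q. rewrite Gx, Wc, <- scale_sub, norm2_scale in Q.
  apply (Rmult_eq_reg_l A); [|lra]. rewrite Q. ring. Qed.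

Lemma ND_all m (Z : CD m -> Prop) : is_subring m Z -> is_discrete m Z -> conj_closed m Z ->
  forall n a x0, valid m Z a x0 -> ND m a n.
Proof. intros HR HD HC n. induction n; intros a x0 V; simpl; auto.
  pose proof (valid_shift m Z a x0 V) as V'.
  specialize (IHn _ _ V'). split; auto.
  pose proof (mainE m Z _ _ n HR HD HC V' IHn) as E.
  destruct (Gdata m (fun k => a (S k)) (S n)) as [[A W] C].
  destruct E as [HA [_ HE]].
  pose proof (Pr_le1 m Z _ _ (S n) V') as P1.
  pose proof (Pr_lt m Z _ _ n V') as P2.
  pose proof (Pr_le1 m Z _ _ n V') as P3.
  intro Hz.
  set (c := cf_from m (fun k => a (S k)) 1 n) in *.
  assert (Hc : c = cd_opp m (a 1%nat)).
  { rewrite <- (add_sub_cancel m c (a 1%nat)), Hz. unfold cd_sub. apply add_zero_l. }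
  rewrite Hc, sub_opp in HE. unfold T in *. rewrite sub_add_cancel in HE.
  destruct V as [_ [H2 H3]]. specialize (H2 0%nat). specialize (H3 0%nat). simpl in H2, H3.
  rewrite norm2_inv in HE by auto. pose proof (norm2_pos m x0 H2).
  assert (1 < / cd_norm2 m x0). { rewrite <- Rinv_1. apply Rinv_lt_contravar; lra. }
  assert (A * / cd_norm2 m x0 >= / cd_norm2 m x0).
  { apply Rle_ge. rewrite <- (Rmult_1_l (/ cd_norm2 m x0)) at 1. apply Rmult_le_compat_r; lra. }
  lra. Qed.


Fixpoint cellT (m : nat) : Type := match m with 0%nat => Z | S m' => (cellT m' * cellT m')%type end.
Fixpoint cell (m : nat) (K : R) : CD m -> cellT m :=
  match m return CD m -> cellT m with
  | 0%nat => fun x => up (K * x)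
  | S m' => fun x => (cell m' K (fst x), cell m' K (snd x))
  end.
Definition zrange (B : nat) : list Z := map (fun i => (Z.of_nat i - Z.of_nat B)%Z) (seq 0 (2*B+2)).
Fixpoint cells (m : nat) (B : nat) : list (cellT m) :=
  match m return list (cellT m) with
  | 0%nat => zrange B
  | S m' => list_prod (cells m' B) (cells m' B)
  end.

Lemma zrange_in B z : (- Z.of_nat B <= z <= Z.of_nat B + 1)%Z -> In z (zrange B).
Proof. intros. unfold zrange. apply in_map_iff. exists (Z.to_nat (z + Z.of_nat B)). split. lia.
  apply in_seq. lia. Qed.

Lemma cell_in m K B r : (forall t, t * t <= r -> - INR B < K * t <= INR B) ->
  forall x, cd_norm2 m x <= r -> In (cell m K x) (cells m B).
Proof. intros HB. induction m; intros x Hx; simpl in *.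
  - apply zrange_in. destruct (HB x Hx) as [H1 H2]. destruct (archimed (K * x)) as [A1 A2].
    rewrite INR_IZR_INZ in H1, H2.
    assert (E1 : IZR (- Z.of_nat B) < IZR (up (K * x))) by (rewrite opp_IZR; lra).
    assert (E2 : IZR (up (K * x)) <= IZR (Z.of_nat B + 1)) by (rewrite plus_IZR; lra).
    apply lt_IZR in E1. apply le_IZR in E2. lia.
  - destruct x as [x1 x2]. simpl in *. pose proof (norm2_nonneg m x1). pose proof (norm2_nonneg m x2).
    apply in_prod; apply IHm; lra.
Qed.

Lemma cell_close m K x y : cell m K x = cell m K y -> cd_norm2 m (cd_sub m x y) * (K * K) < 2 ^ m.
Proof. revert x y; induction m; intros x y H; simpl in *.
  - destruct (archimed (K * x)) as [A1 A2]. destruct (archimed (K * y)) as [B1 B2].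
    rewrite H in A1, A2. unfold cd_sub; simpl.
    assert (-1 < K * x - K * y < 1) by lra. nra.
  - destruct x as [x1 x2], y as [y1 y2]. simpl in *. inversion H.
    pose proof (IHm _ _ H1). pose proof (IHm _ _ H2). unfold cd_sub in *. lra.
Qed.

Lemma cover_list m (P : CD m -> Prop) K r (cs : list (cellT m)) :
  (forall z z', P z -> P z' -> cell m K z = cell m K z' -> z = z') ->
  exists L, forall z, P z -> cd_norm2 m z <= r -> In (cell m K z) cs -> In z L.
Proof. intros Hs. induction cs as [|c cs IH].
  - exists nil. intros z _ _ [].
  - destruct IH as [L HL].
    destruct (classic (exists z0, P z0 /\ cd_norm2 m z0 <= r /\ cell m K z0 = c)) as [[z0 [H1 [H2 H3]]]|Hn].
    + exists (z0 :: L). intros z Hz Hr [Hc|Hc].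
      * left. apply Hs; congruence.
      * right. auto.
    + exists L. intros z Hz Hr [Hc|Hc]; auto. exfalso. apply Hn. exists z; auto.
Qed.

Lemma finite_cover m (P : CD m -> Prop) d r : 0 < d ->
  (forall z z', P z -> P z' -> cd_norm2 m (cd_sub m z z') < d -> z = z') ->
  exists L, forall z, P z -> cd_norm2 m z <= r -> In z L.
Proof. intros Hd Hs.
  set (K := 2 ^ m / d + 1).
  assert (HK : 0 < 2 ^ m / d). { apply Rdiv_lt_0_compat; auto. apply pow_lt; lra. }
  assert (K1 : K >= 1) by (unfold K; lra).
  assert (dK : d * K = 2 ^ m + d) by (unfold K; field; lra).
  assert (HKK : 2 ^ m / (K * K) < d).
  { assert (K * K >= K) by nra.
    assert (d * (K * K) >= d * K) by (apply Rmult_ge_compat_l; lra).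
    apply (Rmult_lt_reg_r (K*K)); [nra|]. unfold Rdiv; rewrite Rmult_assoc, Rinv_l by nra. lra. }
  destruct (INR_archimed 1 (K * (1 + Rabs r) + 1) ltac:(lra)) as [B HB]. rewrite Rmult_1_r in HB.
  assert (HB' : forall t, t * t <= r -> - INR B < K * t <= INR B).
  { intros t Ht. assert (Rabs t <= 1 + Rabs r).
    { destruct (Rle_or_lt (Rabs t) 1). pose proof (Rabs_pos r); lra.
      assert (Rabs t * Rabs t = t * t) by (rewrite <- Rabs_mult; apply Rabs_right; nra).
      pose proof (Rle_abs r). nra. }
    assert (0 < K) by (unfold K; lra).
    pose proof (Rle_abs t). pose proof (Rle_abs (-t)). rewrite Rabs_Ropp in H2.
    assert (K * t <= K * (1 + Rabs r)) by (apply Rmult_le_compat_l; lra).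
    assert (K * (-t) <= K * (1 + Rabs r)) by (apply Rmult_le_compat_l; lra).
    split; lra. }
  destruct (cover_list m P K r (cells m B)) as [L HL].
  { intros z z' Hz Hz' Hc. apply Hs; auto. pose proof (cell_close m K z z' Hc).
    assert (0 < K * K) by (unfold K; nra).
    apply (Rmult_lt_reg_r (K * K)); auto.
    apply (Rlt_le_trans _ (2 ^ m)); auto.
    apply (Rmult_lt_compat_r (K*K)) in HKK; auto. unfold Rdiv in HKK.
    rewrite Rmult_assoc, Rinv_l, Rmult_1_r in HKK by lra. lra. }
  exists L. intros z Hz Hr. apply HL; auto. apply (cell_in m K B r HB'); auto.
Qed.


Lemma NoDup_map_in {X Y} (f : X -> Y) l : NoDup l ->
  (forall x y, In x l -> In y l -> f x = f y -> x = y) -> NoDup (map f l).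
Proof. induction l; intros Hn Hi; simpl. constructor. inversion Hn; subst. constructor.
  - intro Hm. apply in_map_iff in Hm. destruct Hm as [y [E Hy]].
    assert (y = a) by (apply Hi; simpl; auto). subst; auto.
  - apply IHl; auto. intros; apply Hi; simpl; auto. Qed.

Definition mx (l : list nat) := fold_right Nat.max 0%nat l.
Lemma mx_in l x : In x l -> (x <= mx l)%nat.
Proof. induction l; simpl; intros H. contradiction. destruct H as [H|H]. subst; lia. specialize (IHl H). lia. Qed.

Lemma pigeon {X} (bad : nat -> Prop) (f : nat -> X) (L : list X) :
  (forall n, bad n -> In (f n) L) -> (forall n n', bad n -> bad n' -> f n = f n' -> n = n') ->
  exists N, forall n, (N <= n)%nat -> ~ bad n.
Proof. intros HL Hi. apply NNPP. intro Hc.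
  assert (Hinf : forall N, exists n, (N <= n)%nat /\ bad n).
  { intros N. apply NNPP. intro H. apply Hc. exists N. intros n Hn Hb. apply H. exists n; auto. }
  assert (Hl : forall j, exists l, length l = j /\ NoDup l /\ forall n, In n l -> bad n).
  { induction j. exists nil; repeat split; auto. constructor. intros _ [].
    destruct IHj as [l [H1 [H2 H3]]]. destruct (Hinf (S (mx l))) as [n [Hn Hb]].
    exists (n :: l). repeat split; simpl; auto. constructor; auto.
    intro Hin. apply mx_in in Hin. lia. intros k [Hk|Hk]; subst; auto. }
  destruct (Hl (S (length L))) as [l [H1 [H2 H3]]].
  assert (NoDup (map f l)) by (apply NoDup_map_in; auto).
  assert (incl (map f l) L).
  { intros y Hy. apply in_map_iff in Hy. destruct Hy as [x [E Hx]]. subst. auto. }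
  pose proof (NoDup_incl_length H H0). rewrite length_map in H4. lia.
Qed.

Lemma norm2_tri m x y : cd_norm2 m y <= 2 * cd_norm2 m x + 2 * cd_norm2 m (cd_sub m x y).
Proof. pose proof (norm2_nonneg m (cd_sub m (cd_scale m 2 x) y)).
  rewrite norm2_sub, norm2_scale, ip_scale_l in H. rewrite norm2_sub. lra. Qed.

Theorem theorem1p2 (m : nat) (Hm : (m <= 3)%nat) (Z : CD m -> Prop)
  (HZring : is_subring m Z) (HZdisc : is_discrete m Z)
  (HZconj : conj_closed m Z)
  (a : nat -> CD m) (x0 : CD m)
  (Ha : forall n, (1 <= n)%nat -> Z (a n))
  (Hdef : forall n, orbit m a x0 n <> cd_zero m)
  (Hlt : forall n, cd_norm m (orbit m a x0 n) < 1) :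
  cd_converges_to m (convergent m a) x0.
Proof.
  assert (V : valid m Z a x0).
  { split; [auto | split; auto]. intros k. specialize (Hlt k). unfold cd_norm in Hlt.
    destruct (Rlt_or_le (cd_norm2 m (orbit m a x0 k)) 1) as [H|H]; auto. exfalso.
    pose proof (sqrt_le_1_alt 1 _ H). rewrite sqrt_1 in H0. lra. }
  pose proof (ND_all m Z HZring HZdisc HZconj) as HND.
  destruct (Zsep m Z HZring HZdisc) as [d [Hd Hs]].
  intros eps Heps.
  set (q := / (eps * eps)).
  assert (Hq : 0 < q) by (unfold q; apply Rinv_0_lt_compat; nra).
  set (r := 4 * (q * q)).
  destruct (finite_cover m Z d r Hd Hs) as [L HL].
  set (Af := fun n => fst (fst (Gdata m a (S n)))).
  set (Wf := fun n => snd (fst (Gdata m a (S n)))).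
  set (Cf := fun n => snd (Gdata m a (S n))).
  assert (F : forall n, 1 <= Af n /\ Wf n = cd_scale m (Af n) (cf_from m a 1 n) /\
     Af n * cd_norm2 m (cd_sub m x0 (cf_from m a 1 n)) = Pr m a x0 (S n) /\
     Z (cd_scale m (Af n) (cd_one m)) /\ Z (Wf n) /\ cd_norm2 m (Wf n) = Af n * Cf n /\
     Gdata m a (S n) = (Af n, Wf n, Cf n)).
  { intros n. pose proof (mainE m Z a x0 n HZring HZdisc HZconj V (HND n a x0 V)) as E1.
    pose proof (Gint m Z a (S n) HZring HZconj Ha) as E2.
    pose proof (Ginv m a (S n)) as E3.
    unfold Af, Wf, Cf. destruct (Gdata m a (S n)) as [[A W] C]. simpl. tauto. }
  set (bad := fun n => Af n * (eps * eps) <= Pr m a x0 (S n)).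
  destruct (pigeon bad (fun n => (cd_scale m (Af n) (cd_one m), Wf n)) (list_prod L L)) as [N HN].
  - intros n Hb. unfold bad in Hb. destruct (F n) as [A1 [A2 [A3 [A4 [A5 _]]]]].
    pose proof (Pr_le1 m Z a x0 (S n) V).
    assert (HA : Af n <= q).
    { unfold q. apply (Rmult_le_reg_r (eps * eps)); [nra|]. rewrite Rinv_l by nra. lra. }
    assert (HAA : Af n * Af n <= q * q) by nra.
    apply in_prod; apply HL; auto.
    + rewrite norm2_scale, norm2_one. unfold r. nra.
    + rewrite A2, norm2_scale.
      pose proof (norm2_tri m x0 (cf_from m a 1 n)).
      pose proof (norm2_nonneg m (cd_sub m x0 (cf_from m a 1 n))).
      destruct V as [_ [_ H3]]. specialize (H3 0%nat). simpl in H3.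
      assert (cd_norm2 m (cd_sub m x0 (cf_from m a 1 n)) <= 1) by nra.
      assert (cd_norm2 m (cf_from m a 1 n) <= 4) by lra.
      pose proof (norm2_nonneg m (cf_from m a 1 n)).
      unfold r. assert (Af n * Af n * cd_norm2 m (cf_from m a 1 n) <= q * q * 4).
      { apply Rmult_le_compat; nra. } lra.
  - intros n n' Hb Hb' E. injection E as E1 E2.
    destruct (F n) as [A1 [_ [_ [_ [_ [A6 A7]]]]]].
    destruct (F n') as [B1 [_ [_ [_ [_ [B6 B7]]]]]].
    apply (f_equal (cd_norm2 m)) in E1. rewrite !norm2_scale, norm2_one in E1.
    assert (EA : Af n = Af n') by nra.
    assert (EC : Cf n = Cf n').
    { rewrite E2, EA in A6. rewrite A6 in B6. apply (Rmult_eq_reg_l (Af n')); lra. }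
    assert (EP : Pr m a x0 (S n) = Pr m a x0 (S n')).
    { rewrite <- !(G_at_x0 m a x0) by (destruct V as [_ [H _]]; auto). rewrite A7, B7, EA, E2, EC. auto. }
    destruct (lt_eq_lt_dec n n') as [[Hlt'|Heq]|Hgt]; auto; exfalso.
    + pose proof (Pr_decr m Z a x0 (S n) (S n') V ltac:(lia)). lra.
    + pose proof (Pr_decr m Z a x0 (S n') (S n) V ltac:(lia)). lra.
  - exists N. intros n Hn. specialize (HN n Hn). unfold bad in HN.
    destruct (F n) as [A1 [_ [A3 _]]].
    assert (Hs2 : cd_norm2 m (cd_sub m x0 (cf_from m a 1 n)) < eps * eps).
    { apply (Rmult_lt_reg_l (Af n)); lra. }
    unfold cd_norm, convergent. rewrite norm2_sub_sym.
    rewrite <- (sqrt_square eps) by lra. apply sqrt_lt_1; try nra. apply norm2_nonneg.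
Qed.
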